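(* Let $\{a_n : n\in\mathbb{R}\cap[1,\infty)\}$ be positive real numbers such that (1) there is $c>0$ such that $\dfrac{a_{m^2n}}{a_{mn}}=\dfrac{a_{mn}}{a_n}\bigl(1+O(n^{-c})\bigr)$ for all $m\in(1.1,10)$, where the constant implicit in $O(n^{-c})$ does not depend on $m$ in this range; and (2) $\lim_{\epsilon\to0}\liminf_{n\to\infty}\inf_{n\le s\le t\le(1+\epsilon)n}\dfrac{a_t}{a_s}\ge 1$. Then there exist $0<C<\infty$, $\alpha\in\mathbb{R}$ and $c'>0$ such that $a_n=Cn^{\alpha}\bigl(1+O(n^{-c'})\bigr)$ as $n\to\infty$.
   Context: $O(n^{-c})$ denotes a quantity bounded in absolute value by a constant times $n^{-c}$ for all $n$. *)

(* Defs.v *)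
From Stdlib Require Export Reals.
Open Scope R_scope.

Definition hyp_ratio (a : R -> R) : Prop :=
  exists c : R, 0 < c /\
  exists K : R, forall m n : R, 11/10 < m < 10 -> 1 <= n ->
    exists d : R, Rabs d <= K * Rpower n (- c) /\
      a (m ^ 2 * n) / a (m * n) = a (m * n) / a n * (1 + d).

(* Hypothesis (2): lim_{eps->0+} liminf_{n->oo} inf_{n<=s<=t<=(1+eps)n} a_t/a_s >= 1,
   unfolded: the map eps |-> liminf ... is nonincreasing in eps and <= 1, so
   the condition says: for every delta > 0 there are eps > 0 and N such that
   a_t/a_s >= 1 - delta whenever N <= n <= s <= t <= (1+eps) n. *)
Definition hyp_slow (a : R -> R) : Prop :=
  forall delta : R, 0 < delta ->
  exists eps : R, 0 < eps /\
  exists N : R, forall n s t : R, N <= n -> n <= s -> s <= t -> t <= (1 + eps) * n ->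
    1 - delta <= a t / a s.

(* Main.v *)
Require Import Defs.
From Stdlib Require Import Reals Lra Lia.
From Stdlib Require Import IndefiniteDescription.
Open Scope R_scope.

Definition E (c x : R) := exp (- c * x).

Lemma E_pos c x : 0 < E c x.
Proof. unfold E; apply exp_pos. Qed.

Lemma E_add c x t : E c (x + t) = E c x * exp (- c * t).
Proof. unfold E; rewrite <- exp_plus; f_equal; ring. Qed.

Lemma E_S c x : E c (x + 1) = exp (- c) * E c x.
Proof. rewrite E_add; rewrite Rmult_comm; f_equal; f_equal; ring. Qed.

Lemma E_dec c x y : 0 <= c -> x <= y -> E c y <= E c x.
Proof.
  intros Hc Hxy. unfold E. destruct (Req_dec (-c*y) (-c*x)) as [e|ne].
  - rewrite e; lra.
  - left; apply exp_increasing. nra.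
Qed.

Lemma E_inv c x t : 0 <= c -> 0 <= t -> E c (x + t) * (1 + c * t) <= E c x.
Proof.
  intros Hc Ht. rewrite E_add.
  pose proof (exp_ineq1_le (c * t)).
  assert (exp (- c * t) * exp (c * t) = 1).
  { rewrite <- exp_plus. replace (- c * t + c * t) with 0 by ring. apply exp_0. }
  pose proof (E_pos c x). pose proof (exp_pos (- c * t)).
  assert (exp (-c*t) * (1 + c*t) <= 1) by nra. nra.
Qed.

Lemma E_le1 c x : 0 <= c -> 0 <= x -> E c x <= 1.
Proof.
  intros Hc Hx. pose proof (E_inv c 0 x Hc Hx). replace (0 + x) with x in H by ring.
  unfold E at 2 in H. replace (-c*0) with 0 in H by ring. rewrite exp_0 in H.
  pose proof (E_pos c x). assert (0 <= c * x) by nra. nra.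
Qed.

Lemma lin_le z W : (forall n : nat, INR n * z <= W) -> z <= 0.
Proof.
  intros H. destruct (Rle_or_lt z 0) as [h|h]; auto.
  destruct (INR_archimed z W h) as [n Hn]. specialize (H n). lra.
Qed.

Lemma nat_above r : exists m : nat, r <= INR m.
Proof.
  destruct (INR_archimed 1 r) as [n Hn]; [lra|]. exists n. lra.
Qed.

Lemma zero_E c z M x : 0 < c ->
  (forall n : nat, Rabs z <= M * E c (x + INR n)) -> z = 0.
Proof.
  intros Hc H.
  assert (HM : 0 <= M).
  { specialize (H 0%nat). pose proof (Rabs_pos z). pose proof (E_pos c (x + INR 0)). nra. }
  assert (forall n : nat, INR n * (c * Rabs z) <= M * E c x).
  { intros n. specialize (H n). pose proof (pos_INR n).
    pose proof (E_inv c x (INR n) (Rlt_le _ _ Hc) H0).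
    pose proof (E_pos c (x + INR n)). pose proof (Rabs_pos z).
    assert (0 <= c * INR n) by nra.
    assert (Rabs z * (1 + c * INR n) <= M * E c (x + INR n) * (1 + c * INR n)) by nra.
    assert (M * E c (x + INR n) * (1 + c * INR n) <= M * E c x) by nra.
    nra. }
  apply lin_le in H0. pose proof (Rabs_pos z).
  assert (Rabs z = 0) by nra.
  destruct (Req_dec z 0); auto. apply Rabs_no_R0 in H3. contradiction.
Qed.

Lemma le_eps a b : (forall eps, 0 < eps -> a <= b + eps) -> a <= b.
Proof.
  intros H. destruct (Rle_or_lt a b); auto.
  specialize (H ((a - b)/2)). lra.
Qed.

Lemma small_E c M eps : 0 < c -> 0 <= M -> 0 < eps ->
  exists X, 0 <= X /\ forall x, X <= x -> M * E c x <= eps.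
Proof.
  intros Hc HM He. exists (M / (eps * c)). split.
  - apply Rmult_le_pos; auto. left; apply Rinv_0_lt_compat; nra.
  - intros x Hx.
    assert (0 <= x).
    { apply Rle_trans with (M / (eps*c)); auto. apply Rmult_le_pos; auto. left; apply Rinv_0_lt_compat; nra. }
    pose proof (E_inv c 0 x (Rlt_le _ _ Hc) H). replace (0 + x) with x in H0 by ring.
    unfold E at 2 in H0. replace (-c*0) with 0 in H0 by ring. rewrite exp_0 in H0.
    assert (c * x >= M / eps).
    { assert (M / (eps * c) * c = M / eps) by (field; lra).
      assert (M/(eps*c) * c <= x * c) by (apply Rmult_le_compat_r; lra). lra. }
    assert (M / eps * eps = M) by (field; lra).
    pose proof (E_pos c x).
    destruct (Rle_or_lt (M * E c x) eps); auto.
    assert (0 <= M / eps) by (apply Rmult_le_pos; auto; left; apply Rinv_0_lt_compat; lra).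
    assert (M * E c x * (1 + c * x) <= M) by nra.
    assert (M * E c x * (1 + M/eps) <= M * E c x * (1 + c * x)) by nra.
    assert (M * E c x * (M/eps) > M/eps * eps) by nra.
    lra.
Qed.

Lemma r_lt1 c : 0 < c -> 0 < exp (- c) < 1.
Proof. intros; split. apply exp_pos. rewrite <- exp_0. apply exp_increasing. lra. Qed.

Lemma tele c M x (v : nat -> R) : 0 < c -> 0 <= M ->
  (forall j : nat, Rabs (v (S j) - v j) <= M * E c (x + INR j)) ->
  forall n k, Rabs (v (n + k)%nat - v n) <=
     M / (1 - exp (- c)) * (E c (x + INR n) - E c (x + INR (n + k))).
Proof.
  intros Hc HM Hv n k. pose proof (r_lt1 c Hc).
  induction k.
  - rewrite Nat.add_0_r. rewrite Rminus_diag, Rabs_R0. lra.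
  - rewrite Nat.add_succ_r. rewrite S_INR.
    replace (v (S (n + k)) - v n) with ((v (S (n+k)) - v (n+k)%nat) + (v (n+k)%nat - v n)) by ring.
    eapply Rle_trans; [apply Rabs_triang|].
    specialize (Hv (n+k)%nat).
    replace (x + (INR (n + k) + 1)) with ((x + INR (n+k)) + 1) by ring.
    rewrite E_S.
    assert (M / (1 - exp (-c)) * (E c (x + INR n) - exp (-c) * E c (x + INR (n+k)))
       = M / (1 - exp (-c)) * (E c (x + INR n) - E c (x + INR (n+k))) + M * E c (x + INR (n+k))).
    { field. lra. }
    rewrite H0. lra.
Qed.

Lemma Rabs_le_between' a b : Rabs a <= b -> - b <= a <= b.
Proof.
  intros H. pose proof (Rle_abs a). pose proof (Rle_abs (-a)). rewrite Rabs_Ropp in H1. lra.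
Qed.

Lemma lemG c M X (phi : R -> R) : 0 < c -> 0 <= M ->
  (forall x, X <= x -> Rabs (phi (x + 1) - phi x) <= M * E c x) ->
  exists psi : R -> R,
    (forall x, X <= x -> psi (x + 1) = psi x) /\
    (forall x, X <= x -> Rabs (phi x - psi x) <= M / (1 - exp (- c)) * E c x).
Proof.
  intros Hc HM Hphi. pose proof (r_lt1 c Hc) as Hr.
  set (M' := M / (1 - exp (-c))).
  assert (HM' : 0 <= M') by (unfold M'; apply Rmult_le_pos; auto; left; apply Rinv_0_lt_compat; lra).
  assert (Hex : forall x, exists l, X <= x ->
     forall n : nat, Rabs (phi (x + INR n) - l) <= M' * E c (x + INR n)).
  { intros x. destruct (Rle_or_lt X x) as [Hx|Hx].
    2:{ exists 0. intros; lra. }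
    set (u := fun n : nat => phi (x + INR n)).
    assert (Hu : forall j : nat, Rabs (u (S j) - u j) <= M * E c (x + INR j)).
    { intros j. unfold u. rewrite S_INR. replace (x + (INR j + 1)) with ((x + INR j) + 1) by ring.
      apply Hphi. pose proof (pos_INR j). lra. }
    pose proof (tele c M x u Hc HM Hu) as Ht.
    assert (Ht' : forall n k, Rabs (u (n + k)%nat - u n) <= M' * E c (x + INR n)).
    { intros n k. eapply Rle_trans; [apply Ht|]. fold M'.
      pose proof (E_pos c (x + INR (n+k))). nra. }
    assert (Hcau : Cauchy_crit u).
    { intros eps Heps. destruct (small_E c (2 * M') (eps/2) Hc) as [Y [HY0 HY]]; try lra.
      destruct (nat_above (Y - x)) as [N HN]. exists N. intros n m Hn Hm.
      unfold Rdist.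
      replace n with (N + (n - N))%nat by lia. replace m with (N + (m - N))%nat by lia.
      pose proof (Ht' N (n - N)%nat). pose proof (Ht' N (m - N)%nat).
      specialize (HY (x + INR N) ltac:(lra)).
      replace (u (N + (n - N))%nat - u (N + (m - N))%nat) with
        ((u (N + (n - N))%nat - u N) - (u (N + (m - N))%nat - u N)) by ring.
      eapply Rle_lt_trans; [apply Rabs_triang|]. rewrite Rabs_Ropp. lra. }
    destruct (R_complete u Hcau) as [l Hl].
    exists l. intros _ n. apply le_eps. intros eps Heps.
    destruct (Hl eps Heps) as [N HN].
    specialize (HN (n + N)%nat ltac:(lia)). unfold Rdist in HN.
    specialize (Ht' n N). change (phi (x + INR n)) with (u n).
    replace (u n - l) with (-(u (n+N)%nat - u n) + (u (n+N)%nat - l)) by ring.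
    eapply Rle_trans; [apply Rabs_triang|]. rewrite Rabs_Ropp. lra. }
  destruct (functional_choice _ Hex) as [psi Hpsi].
  exists psi. split.
  - intros x Hx. apply Rminus_diag_uniq. apply (zero_E c _ (2 * M') x Hc). intros n.
    pose proof (Hpsi (x+1) ltac:(lra) n) as A.
    pose proof (Hpsi x Hx (S n)) as B.
    rewrite S_INR in B. replace (x + (INR n + 1)) with (x + 1 + INR n) in B by ring.
    pose proof (E_dec c (x + INR n) (x + 1 + INR n) (Rlt_le _ _ Hc) ltac:(lra)).
    replace (psi (x+1) - psi x) with (-(phi (x + 1 + INR n) - psi (x+1)) + (phi (x + 1 + INR n) - psi x)) by ring.
    eapply Rle_trans; [apply Rabs_triang|]. rewrite Rabs_Ropp. nra.
  - intros x Hx. pose proof (Hpsi x Hx 0%nat). simpl INR in H. rewrite Rplus_0_r in H. exact H.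
Qed.

Lemma chain (P : R -> R) X eta R0 : 0 < eta -> 0 <= R0 ->
  (forall u v, X <= u -> u <= v -> v <= u + eta -> P v - P u >= - R0) ->
  forall k : nat, forall u v, X <= u -> u <= v -> v <= u + INR k * eta -> P v - P u >= - (INR k * R0).
Proof.
  intros He HR H k. induction k; intros u v Hu Huv Hv.
  - simpl in *. assert (v = u) by lra. subst. lra.
  - rewrite S_INR in *. destruct (Rle_or_lt v (u + eta)).
    + specialize (H u v Hu Huv H0). pose proof (pos_INR k). nra.
    + specialize (IHk u (v - eta) Hu ltac:(lra) ltac:(lra)).
      specialize (H (v - eta) v ltac:(lra) ltac:(lra) ltac:(lra)). lra.
Qed.

Lemma per_n (P : R -> R) X : (forall x, X <= x -> P (x + 1) = P x) ->
  forall n : nat, forall x, X <= x -> P (x + INR n) = P x.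
Proof.
  intros H n. induction n; intros x Hx.
  - simpl. rewrite Rplus_0_r. auto.
  - rewrite S_INR. replace (x + (INR n + 1)) with ((x + INR n) + 1) by ring.
    rewrite H. apply IHn; auto. pose proof (pos_INR n); lra.
Qed.

Lemma abstract (f : R -> R) c B X0 eta l0 X2 : 0 < c -> 0 <= B -> 0 < eta -> 0 <= l0 ->
  (forall h, 1 <= h <= 2 -> forall x, X0 <= x ->
     Rabs (f (x + h + h) - 2 * f (x + h) + f x) <= B * E c x) ->
  (forall u v, X2 <= u -> u <= v -> v <= u + eta -> f v - f u >= - l0) ->
  exists alpha beta B2 X, 0 <= B2 /\ forall x, X <= x -> Rabs (f x - alpha * x - beta) <= B2 * E c x.
Proof.
  intros Hc HB Heta Hl0 HD HS.
  pose proof (r_lt1 c Hc) as Hr.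
  assert (Hinv : forall M, 0 <= M -> 0 <= M / (1 - exp (-c))).
  { intros M HM. apply Rmult_le_pos; auto. left; apply Rinv_0_lt_compat; lra. }
  set (X3 := Rmax (Rmax X0 X2) 0).
  assert (HX30 : X0 <= X3) by (unfold X3; pose proof (Rmax_l (Rmax X0 X2) 0); pose proof (Rmax_l X0 X2); lra).
  assert (HX32 : X2 <= X3) by (unfold X3; pose proof (Rmax_l (Rmax X0 X2) 0); pose proof (Rmax_r X0 X2); lra).
  assert (HX3 : 0 <= X3) by (unfold X3; apply Rmax_r).
  assert (HE1 : forall x, X3 <= x -> E c x <= 1) by (intros; apply E_le1; lra).
  destruct (lemG c B X3 (fun x => f (x + 1) - f x) Hc HB) as [L [HLp HLb]].
  { intros x Hx. replace (f (x + 1 + 1) - f (x + 1) - (f (x + 1) - f x)) with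
      (f (x + 1 + 1) - 2 * f (x + 1) + f x) by ring. apply HD; lra. }
  set (B1 := B / (1 - exp (-c))) in HLb.
  assert (HB1 : 0 <= B1) by (apply Hinv; auto).
  set (B3 := B1 / (1 - exp (-c))).
  assert (HB3 : 0 <= B3) by (apply Hinv; auto).
  pose proof (per_n L X3 HLp) as HLn.
  assert (Hsum : forall x, X3 <= x -> forall n : nat, Rabs (f (x + INR n) - f x - INR n * L x) <= B3).
  { intros x Hx n.
    set (v := fun n : nat => f (x + INR n) - INR n * L x).
    assert (Hv : forall j : nat, Rabs (v (S j) - v j) <= B1 * E c (x + INR j)).
    { intros j. unfold v. rewrite S_INR.
      replace (f (x + (INR j + 1)) - (INR j + 1) * L x - (f (x + INR j) - INR j * L x))
        with (f (x + INR j + 1) - f (x + INR j) - L (x + INR j)).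
      2:{ rewrite HLn by lra. replace (x + INR j + 1) with (x + (INR j + 1)) by ring. ring. }
      apply HLb. pose proof (pos_INR j); lra. }
    pose proof (tele c B1 x v Hc HB1 Hv 0 n) as T. simpl in T.
    unfold v in T. simpl INR in T. rewrite Rplus_0_r in T.
    replace (f (x + INR n) - f x - INR n * L x) with (f (x + INR n) - INR n * L x - (f x - 0 * L x)) by ring.
    fold B3 in T. eapply Rle_trans; [apply T|].
    pose proof (E_pos c (x + INR n)). pose proof (HE1 x Hx). nra. }
  assert (Hmono : forall x x', X3 <= x -> x <= x' -> x' <= x + eta -> L x <= L x').
  { intros x x' Hx Hxx' Hx'.
    assert (L x - L x' <= 0); [|lra].
    apply (lin_le _ (l0 + 2 * B3 + f x' - f x)). intros n.
    pose proof (pos_INR n).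
    pose proof (HS (x + INR n) (x' + INR n) ltac:(lra) ltac:(lra) ltac:(lra)).
    pose proof (Hsum x Hx n). pose proof (Hsum x' ltac:(lra) n).
    apply Rabs_le_between' in H1. apply Rabs_le_between' in H2.
    lra. }
  assert (Hch := chain L X3 eta 0 Heta (Rle_refl 0)).
  assert (Hconst : forall y, X3 <= y -> L y = L X3).
  { intros y Hy.
    destruct (nat_above ((y - X3) / eta)) as [k Hk].
    assert (y <= X3 + INR k * eta).
    { assert ((y - X3)/eta * eta = y - X3) by (field; lra).
      assert ((y - X3)/eta * eta <= INR k * eta) by (apply Rmult_le_compat_r; lra). lra. }
    assert (A1 := Hch ltac:(intros u v Hu Huv Hv; pose proof (Hmono u v Hu Huv Hv); lra) k X3 y (Rle_refl _) Hy H).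
    destruct (nat_above (y - X3)) as [m Hm].
    destruct (nat_above (INR m / eta)) as [k' Hk'].
    assert (X3 + INR m <= y + INR k' * eta).
    { assert (INR m/eta * eta = INR m) by (field; lra).
      assert (INR m/eta * eta <= INR k' * eta) by (apply Rmult_le_compat_r; lra). lra. }
    assert (A2 := Hch ltac:(intros u v Hu Huv Hv; pose proof (Hmono u v Hu Huv Hv); lra) k' y (X3 + INR m) Hy ltac:(lra) H0).
    rewrite (HLn m X3 (Rle_refl _)) in A2. lra. }
  set (alpha := L X3).
  destruct (lemG c B1 X3 (fun x => f x - alpha * x) Hc HB1) as [p [Hpp Hpb]].
  { intros x Hx. replace (f (x + 1) - alpha * (x + 1) - (f x - alpha * x)) with
      (f (x + 1) - f x - L x).
    2:{ rewrite (Hconst x Hx). unfold alpha. ring. }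
    apply HLb; auto. }
  set (B2 := B1 / (1 - exp (-c))) in Hpb.
  assert (HB2 : 0 <= B2) by (apply Hinv; auto).
  pose proof (per_n p X3 Hpp) as Hpn.
  exists alpha, (p X3), B2, X3. split; auto.
  set (R0 := l0 + Rabs alpha * eta + 2 * B2).
  assert (HR0 : 0 <= R0) by (unfold R0; pose proof (Rabs_pos alpha); nra).
  assert (Hloc : forall u v, X3 <= u -> u <= v -> v <= u + eta -> p v - p u >= - R0).
  { intros u v Hu Huv Hv.
    pose proof (Hpb u Hu). pose proof (Hpb v ltac:(lra)).
    pose proof (HE1 u Hu). pose proof (HE1 v ltac:(lra)).
    pose proof (E_pos c u). pose proof (E_pos c v).
    apply Rabs_le_between' in H. apply Rabs_le_between' in H0.
    pose proof (HS u v ltac:(lra) Huv Hv).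
    assert (alpha * (v - u) <= Rabs alpha * eta).
    { pose proof (Rle_abs alpha). pose proof (Rabs_pos alpha).
      destruct (Rle_or_lt 0 alpha). nra. nra. }
    unfold R0. nra. }
  destruct (nat_above (1 / eta)) as [k0 Hk0].
  assert (Hk0' : 1 <= INR k0 * eta).
  { assert (1/eta * eta = 1) by (field; lra).
    assert (1/eta * eta <= INR k0 * eta) by (apply Rmult_le_compat_r; lra). lra. }
  set (W := INR k0 * R0).
  assert (HW : 0 <= W) by (unfold W; pose proof (pos_INR k0); nra).
  pose proof (chain p X3 eta R0 Heta HR0 Hloc k0) as Hch2.
  assert (Hb1 : forall u v, X3 <= u -> u <= v -> v <= u + 1 -> Rabs (p v - p u) <= W).
  { intros u v Hu Huv Hv. apply Rabs_le. split.
    - pose proof (Hch2 u v Hu Huv ltac:(lra)). unfold W; lra.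
    - pose proof (Hch2 v (u + 1) ltac:(lra) ltac:(lra) ltac:(lra)).
      rewrite Hpp in H by lra. unfold W; lra. }
  assert (HbM : forall m : nat, forall u v, X3 <= u -> u <= v -> v <= u + INR m -> Rabs (p v - p u) <= W).
  { intros m. induction m; intros u v Hu Huv Hv.
    - simpl in Hv. replace v with u by lra. rewrite Rminus_diag, Rabs_R0. auto.
    - rewrite S_INR in Hv. destruct (Rle_or_lt v (u + 1)).
      + apply Hb1; auto.
      + replace v with ((v - 1) + 1) by ring. rewrite Hpp by lra. apply IHm; lra. }
  assert (Hb : forall u v, X3 <= u -> u <= v -> Rabs (p v - p u) <= W).
  { intros u v Hu Huv. destruct (nat_above (v - u)) as [m Hm]. apply (HbM m); lra. }
  assert (HD2 : forall h, 1 <= h <= 2 -> forall y, X3 <= y -> p (y + h + h) - 2 * p (y + h) + p y = 0).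
  { intros h Hh y Hy. apply (zero_E c _ (B + 4 * B2) y Hc). intros n.
    pose proof (pos_INR n).
    rewrite <- (Hpn n (y + h + h)) by lra. rewrite <- (Hpn n (y + h)) by lra. rewrite <- (Hpn n y) by lra.
    pose proof (Hpb (y + h + h + INR n) ltac:(lra)).
    pose proof (Hpb (y + h + INR n) ltac:(lra)).
    pose proof (Hpb (y + INR n) ltac:(lra)).
    pose proof (HD h Hh (y + INR n) ltac:(lra)).
    replace (y + INR n + h + h) with (y + h + h + INR n) in H3 by ring.
    replace (y + INR n + h) with (y + h + INR n) in H3 by ring.
    pose proof (E_dec c (y + INR n) (y + h + h + INR n) (Rlt_le _ _ Hc) ltac:(lra)).
    pose proof (E_dec c (y + INR n) (y + h + INR n) (Rlt_le _ _ Hc) ltac:(lra)).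
    set (e0 := E c (y + INR n)) in *.
    set (G2 := f (y + h + h + INR n) - alpha * (y + h + h + INR n)) in *.
    set (G1 := f (y + h + INR n) - alpha * (y + h + INR n)) in *.
    set (G0 := f (y + INR n) - alpha * (y + INR n)) in *.
    assert (Heq : G2 - 2 * G1 + G0 = f (y + h + h + INR n) - 2 * f (y + h + INR n) + f (y + INR n)) by (unfold G2, G1, G0; ring).
    rewrite <- Heq in H3.
    apply Rabs_le_between' in H0. apply Rabs_le_between' in H1. apply Rabs_le_between' in H2.
    apply Rabs_le_between' in H3. apply Rabs_le. nra. }
  assert (Hstep : forall h, 1 <= h <= 2 -> forall k : nat, forall y, X3 <= y ->
      p (y + INR k * h + h) - p (y + INR k * h) = p (y + h) - p y).
  { intros h Hh k. induction k; intros y Hy.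
    - simpl. rewrite Rmult_0_l, Rplus_0_r. reflexivity.
    - rewrite S_INR. pose proof (pos_INR k).
      pose proof (HD2 h Hh (y + INR k * h) ltac:(nra)).
      replace (y + (INR k + 1) * h) with (y + INR k * h + h) by ring.
      rewrite <- (IHk y Hy). lra. }
  assert (Hlin : forall h, 1 <= h <= 2 -> forall k : nat, forall y, X3 <= y ->
      p (y + INR k * h) - p y = INR k * (p (y + h) - p y)).
  { intros h Hh k. induction k; intros y Hy.
    - simpl. rewrite Rmult_0_l, Rplus_0_r. ring.
    - rewrite S_INR. pose proof (Hstep h Hh k y Hy).
      replace (y + (INR k + 1) * h) with (y + INR k * h + h) by ring.
      specialize (IHk y Hy). nra. }
  assert (Hper : forall h, 1 <= h <= 2 -> forall y, X3 <= y -> p (y + h) = p y).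
  { intros h Hh y Hy.
    assert (p (y + h) - p y <= 0).
    { apply (lin_le _ W). intros k. rewrite <- (Hlin h Hh k y Hy).
      pose proof (pos_INR k). pose proof (Hb y (y + INR k * h) Hy ltac:(nra)).
      apply Rabs_le_between' in H0. lra. }
    assert (- (p (y + h) - p y) <= 0).
    { apply (lin_le _ W). intros k. replace (INR k * - (p (y + h) - p y)) with (- (INR k * (p (y + h) - p y))) by ring.
      rewrite <- (Hlin h Hh k y Hy).
      pose proof (pos_INR k). pose proof (Hb y (y + INR k * h) Hy ltac:(nra)).
      apply Rabs_le_between' in H1. lra. }
    lra. }
  assert (HcM : forall m : nat, forall y, X3 <= y -> y <= X3 + INR m -> p y = p X3).
  { intros m. induction m; intros y Hy Hym.
    - simpl in Hym. replace y with X3 by lra. reflexivity.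
    - rewrite S_INR in Hym. destruct (Rle_or_lt y (X3 + 1)).
      + rewrite <- (Hper (X3 + 2 - y) ltac:(lra) y Hy).
        replace (y + (X3 + 2 - y)) with (X3 + 1 + 1) by ring.
        rewrite Hpp by lra. rewrite Hpp by lra. reflexivity.
      + replace y with ((y - 1) + 1) by ring. rewrite Hpp by lra. apply IHm; lra. }
  intros x Hx. destruct (nat_above (x - X3)) as [m Hm].
  rewrite <- (HcM m x Hx ltac:(lra)). apply Hpb; auto.
Qed.

Lemma ln_bound d : Rabs d <= 1/2 -> Rabs (ln (1 + d)) <= 2 * Rabs d.
Proof.
  intros Hd. apply Rabs_le_between' in Hd.
  set (L := ln (1 + d)).
  assert (HL : exp L = 1 + d) by (apply exp_ln; lra).
  pose proof (exp_ineq1_le L). pose proof (exp_ineq1_le (- L)).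
  rewrite exp_Ropp, HL in H0.
  assert (L <= d) by lra.
  assert (1 - L <= 1 / (1 + d)) by (unfold Rdiv; lra).
  assert ((1 - L) * (1 + d) <= 1).
  { assert (E1 : 1 / (1 + d) * (1 + d) = 1) by (field; lra).
    assert ((1 - L) * (1 + d) <= 1 / (1 + d) * (1 + d)) by (apply Rmult_le_compat_r; lra).
    lra. }
  apply Rabs_le. destruct (Rle_or_lt 0 d).
  - rewrite Rabs_right by lra. nra.
  - rewrite Rabs_left by lra. nra.
Qed.

Lemma exp_bound e : Rabs e <= 1 -> Rabs (exp e - 1) <= 3 * Rabs e.
Proof.
  intros He. apply Rabs_le_between' in He.
  pose proof (exp_ineq1_le e). pose proof (exp_ineq1_le (- e)).
  rewrite exp_Ropp in H0. pose proof (exp_pos e).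
  assert (exp e * / exp e = 1) by (field; lra).
  destruct (Rle_or_lt 0 e).
  - assert (exp e <= 3).
    { pose proof exp_le_3. destruct (Req_dec e 1). subst; lra.
      left. apply Rlt_le_trans with (exp 1); auto. apply exp_increasing. lra. }
    rewrite (Rabs_right e) by lra. apply Rabs_le. split; [lra|].
    assert (exp e * (1 - e) <= 1) by nra. nra.
  - assert (exp e < 1) by (rewrite <- exp_0; apply exp_increasing; lra).
    rewrite (Rabs_left e) by lra. apply Rabs_le. lra.
Qed.

Lemma exp_le x y : x <= y -> exp x <= exp y.
Proof. intros H. destruct (Req_dec x y). subst; lra. left; apply exp_increasing; lra. Qed.

Lemma ln_le x y : 0 < x -> x <= y -> ln x <= ln y.
Proof. intros H H'. destruct (Req_dec x y). subst; lra. left; apply ln_increasing; lra. Qed.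

Lemma ln_divR x y : 0 < x -> 0 < y -> ln (x / y) = ln x - ln y.
Proof. intros. unfold Rdiv. rewrite ln_mult, ln_Rinv; auto. apply Rinv_0_lt_compat; auto. Qed.

Lemma exp_ge1 x : 0 <= x -> 1 <= exp x.
Proof. intros. pose proof (exp_ineq1_le x). lra. Qed.

Theorem lemma2p6 (a : R -> R)
  (Hpos : forall n : R, 1 <= n -> 0 < a n)
  (H1 : hyp_ratio a)
  (H2 : hyp_slow a) :
  exists C : R, 0 < C /\ exists alpha : R, exists c' : R, 0 < c' /\
  exists K N : R, forall n : R, N <= n -> 1 <= n ->
    exists d : R, Rabs d <= K * Rpower n (- c') /\
      a n = C * Rpower n alpha * (1 + d).
Proof.
  destruct H1 as [c [Hc [K HK]]].
  set (f := fun x => ln (a (exp x))).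
  destruct (small_E c (Rabs K) (1/2) Hc (Rabs_pos K) ltac:(lra)) as [X0 [HX0 HX0']].
  assert (HD : forall h, 1 <= h <= 2 -> forall x, X0 <= x ->
     Rabs (f (x + h + h) - 2 * f (x + h) + f x) <= (2 * Rabs K) * E c x).
  { intros h Hh x Hx.
    assert (Hm : 11/10 < exp h < 10).
    { split.
      - pose proof (exp_ineq1_le 1). pose proof (exp_le 1 h ltac:(lra)). lra.
      - pose proof (exp_le h 2 ltac:(lra)). replace 2 with (1 + 1) in H by ring.
        rewrite exp_plus in H. pose proof exp_le_3. pose proof (exp_pos 1). nra. }
    assert (Hn : 1 <= exp x) by (apply exp_ge1; lra).
    destruct (HK (exp h) (exp x) Hm Hn) as [d [Hd Heq]].
    unfold Rpower in Hd. rewrite ln_exp in Hd. fold (E c x) in Hd.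
    replace (- c * x) with (- c * x) in Hd by ring.
    assert (Hd' : Rabs d <= 1/2).
    { specialize (HX0' x Hx). pose proof (E_pos c x). pose proof (Rle_abs K). nra. }
    replace (exp h ^ 2 * exp x) with (exp (x + h + h)) in Heq
      by (rewrite !exp_plus; ring).
    replace (exp h * exp x) with (exp (x + h)) in Heq by (rewrite exp_plus; ring).
    assert (P0 : 0 < a (exp x)) by (apply Hpos; lra).
    assert (P1 : 0 < a (exp (x + h))) by (apply Hpos; apply exp_ge1; lra).
    assert (P2 : 0 < a (exp (x + h + h))) by (apply Hpos; apply exp_ge1; lra).
    assert (Hpd : 0 < 1 + d) by (apply Rabs_le_between' in Hd'; lra).
    assert (Hl : ln (a (exp (x + h + h)) / a (exp (x + h))) =
                 ln (a (exp (x + h)) / a (exp x)) + ln (1 + d)).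
    { rewrite Heq. rewrite ln_mult; auto. unfold Rdiv; apply Rmult_lt_0_compat; auto.
      apply Rinv_0_lt_compat; auto. }
    rewrite !ln_divR in Hl by auto.
    unfold f.
    replace (ln (a (exp (x + h + h))) - 2 * ln (a (exp (x + h))) + ln (a (exp x))) with (ln (1 + d)) by lra.
    eapply Rle_trans; [apply ln_bound; auto|].
    pose proof (Rle_abs K). pose proof (E_pos c x). nra. }
  destruct (H2 (1/2) ltac:(lra)) as [eps [Heps [N HN]]].
  assert (Heta : 0 < ln (1 + eps)).
  { rewrite <- ln_1. apply ln_increasing; lra. }
  assert (HS : forall u v, Rabs N <= u -> u <= v -> v <= u + ln (1 + eps) -> f v - f u >= - ln 2).
  { intros u v Hu Huv Hv.
    pose proof (Rabs_pos N).
    assert (HN1 : N <= exp u).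
    { pose proof (exp_ineq1_le u). pose proof (Rle_abs N). lra. }
    assert (Hst : exp u <= exp v) by (apply exp_le; auto).
    assert (Ht : exp v <= (1 + eps) * exp u).
    { pose proof (exp_le v (u + ln (1 + eps)) Hv). rewrite exp_plus, exp_ln in H0 by lra. lra. }
    specialize (HN (exp u) (exp u) (exp v) HN1 (Rle_refl _) Hst Ht).
    assert (Pu : 0 < a (exp u)) by (apply Hpos; apply exp_ge1; lra).
    assert (Pv : 0 < a (exp v)) by (apply Hpos; apply exp_ge1; lra).
    unfold f. rewrite <- ln_divR by auto.
    assert (ln (1/2) <= ln (a (exp v) / a (exp u))).
    { apply ln_le; lra. }
    unfold Rdiv in H0. rewrite Rmult_1_l, ln_Rinv in H0 by lra. lra. }
  assert (Hl2 : 0 <= ln 2) by (rewrite <- ln_1; apply ln_le; lra).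
  destruct (abstract f c (2 * Rabs K) X0 (ln (1 + eps)) (ln 2) (Rabs N) Hc
      ltac:(pose proof (Rabs_pos K); lra) Heta Hl2 HD HS) as [alpha [beta [B2 [X [HB2 HX]]]]].
  destruct (small_E c B2 1 Hc HB2 ltac:(lra)) as [X1 [HX1 HX1']].
  set (Xf := Rmax X X1).
  exists (exp beta). split; [apply exp_pos|].
  exists alpha, c. split; auto.
  exists (3 * B2), (exp Xf). intros n Hn Hn1.
  assert (Hn0 : 0 < n) by lra.
  set (x := ln n).
  assert (Hx : Xf <= x).
  { unfold x. rewrite <- (ln_exp Xf). apply ln_le; auto. apply exp_pos. }
  assert (HxX : X <= x) by (pose proof (Rmax_l X X1); unfold Xf in Hx; lra).
  assert (HxX1 : X1 <= x) by (pose proof (Rmax_r X X1); unfold Xf in Hx; lra).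
  specialize (HX x HxX). specialize (HX1' x HxX1).
  set (e := f x - alpha * x - beta) in HX.
  exists (exp e - 1). split.
  - unfold Rpower. fold x. fold (E c x).
    eapply Rle_trans; [apply exp_bound|]. all: lra.
  - unfold Rpower. fold x.
    replace (1 + (exp e - 1)) with (exp e) by ring.
    rewrite <- !exp_plus.
    replace (beta + alpha * x + e) with (f x) by (unfold e; ring).
    unfold f, x. rewrite (exp_ln n Hn0). rewrite exp_ln by (apply Hpos; auto). reflexivity.
Qed.
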